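(* Let $n\ge2$, $\alpha\in(-n,0)$ and let $\phi$ be a Young function. For any domain $\Omega\subset\mathbb R^n$, we have $\mathbf B^{\alpha,\phi}(\Omega)\subset\dot{\mathbf B}^{\alpha,\phi}(\Omega)\subset L^1_{\mathrm{loc}}(\Omega)$ as sets.
   Context: A Young function is $\phi\in C([0,\infty))$, convex, with $\phi(0)=0$, $\phi(t)>0$ for $t>0$, $\lim_{t\to\infty}\phi(t)=\infty$. $\dot{\mathbf B}^{\alpha,\phi}(\Omega)$ is the space of measurable $u$ on $\Omega$ with finite $\|u\|_{\dot{\mathbf B}^{\alpha,\phi}(\Omega)}:=\inf\{\lambda>0:\int_\Omega\int_\Omega\phi(\frac{|u(x)-u(y)|}{\lambda|x-y|^{\alpha}})\frac{dx\,dy}{|x-y|^{2n}}\le1\}$. $L^\phi(\Omega)$ consists of measurable $u$ with $\|u\|_{L^\phi(\Omega)}:=\inf\{\lambda>0:\int_\Omega\phi(|u|/\lambda)\,dx\le1\}<\infty$, and $\mathbf B^{\alpha,\phi}(\Omega):=L^\phi(\Omega)\cap\dot{\mathbf B}^{\alpha,\phi}(\Omega)$. *)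

(* Defs.v *)
From HB Require Import structures.
From mathcomp Require Import all_boot all_order all_algebra.
From mathcomp Require Import all_classical all_reals all_analysis.
Set Implicit Arguments. Unset Strict Implicit. Unset Printing Implicit Defensive.
Import Order.TTheory GRing.Theory Num.Theory.
Import numFieldNormedType.Exports.
Local Open Scope classical_set_scope.
Local Open Scope ring_scope.

(* Points of R^n are n-tuples of reals (equipped by MathComp-Analysis with the
   product = Borel sigma-algebra). *)

Section Defs.
Variables (R : realType) (n : nat).

Definition edist (x y : n.-tuple R) : R :=
  Num.sqrt (\sum_(i < n) (tnth x i - tnth y i) ^+ 2).

(* identification of n-tuples with row vectors, to use the library topology *)
Definition rowv (x : n.-tuple R) : 'rV[R]_n := \row_i tnth x i.

Definition is_domain (O : set (n.-tuple R)) : Prop :=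
  O !=set0 /\ open (rowv @` O) /\ connected (rowv @` O).

Definition is_compact (K : set (n.-tuple R)) : Prop := compact (rowv @` K).

Definition box (a b : n.-tuple R) : set (n.-tuple R) :=
  [set x | forall i : 'I_n, tnth a i <= tnth x i <= tnth b i].

(* lebn is (the) Lebesgue measure on the Borel sets of R^n: it gives every box
   its volume (this characterizes it uniquely). *)
Definition is_lebesgue_borel (lebn : {measure set (n.-tuple R) -> \bar R}) :=
  forall a b : n.-tuple R, (forall i, tnth a i <= tnth b i) ->
    lebn (box a b) = (\prod_(i < n) (tnth b i - tnth a i))%:E.

Definition LebT (lebn : {measure set (n.-tuple R) -> \bar R}) :=
  caratheodory_type (mu_ext lebn).

Definition Leb (lebn : {measure set (n.-tuple R) -> \bar R}) :=
  @completed_measure_extension _ _ _ lebn.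

Definition young (phi : R -> R) : Prop :=
  [/\ {within `[0, +oo[, continuous phi},
      (forall s t th : R, 0 <= s -> 0 <= t -> 0 <= th <= 1 ->
         phi (th * s + (1 - th) * t) <= th * phi s + (1 - th) * phi t),
      phi 0 = 0,
      (forall t, 0 < t -> 0 < phi t) &
      phi t @[t --> +oo] --> +oo].

Variable lebn : {measure set (n.-tuple R) -> \bar R}.

Local Notation L := (@Leb lebn).
Local Notation T := (LebT lebn).

Definition Lphi_norm (phi : R -> R) (O : set T) (u : T -> R) : \bar R :=
  ereal_inf [set l%:E | l in [set l : R | 0 < l /\
     (\int[L]_(x in O) (phi (`|u x| / l))%:E <= 1)%E]].

Definition Bdot_norm (alpha : R) (phi : R -> R) (O : set T) (u : T -> R)
  : \bar R :=
  ereal_inf [set l%:E | l in [set l : R | 0 < l /\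
     (\int[L]_(x in O) \int[L]_(y in O)
        (phi (`|u x - u y| / (l * edist x y `^ alpha))
          / edist x y ^+ (2 * n))%:E <= 1)%E]].

Definition Lphi (phi : R -> R) (O : set T) : set (T -> R) :=
  [set u : T -> R | measurable_fun O u /\ (Lphi_norm phi O u < +oo)%E].

Definition Bdot (alpha : R) (phi : R -> R) (O : set T) : set (T -> R) :=
  [set u : T -> R | measurable_fun O u /\ (Bdot_norm alpha phi O u < +oo)%E].

Definition Bsp (alpha : R) (phi : R -> R) (O : set T) : set (T -> R) :=
  Lphi phi O `&` Bdot alpha phi O.

Definition L1loc (O : set T) : set (T -> R) :=
  [set u : T -> R | measurable_fun O u /\
     forall K : set T, K `<=` O -> is_compact K ->
       (\int[L]_(x in K) `|u x|%:E < +oo)%E].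

End Defs.
Arguments Leb {R n} lebn.

(* Main.v *)
Require Import Defs.
From HB Require Import structures.
From mathcomp Require Import all_boot all_order all_algebra.
From mathcomp Require Import all_classical all_reals all_analysis.
From mathcomp Require Import ring lra.
Import Order.TTheory GRing.Theory Num.Theory.
Import numFieldNormedType.Exports.
Import Num.Def.
Import measurable_realfun.
Local Open Scope classical_set_scope.
Local Open Scope ring_scope.
Section S.
Variables (R : realType) (n : nat) (lebn : {measure set (n.-tuple R) -> \bar R}).
Local Notation T := (LebT lebn).
Local Notation L := (Leb lebn).

Lemma meas_lift (A : set (n.-tuple R)) : measurable A -> measurable (A : set T).
Proof. move=> mA. exact: caratheodory_measurable_mu_ext. Qed.

Lemma L_base (A : set (n.-tuple R)) : measurable A -> L A = lebn A.
Proof. move=> mA. exact: measurable_mu_extE. Qed.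

Lemma mfun_lift (D : set (n.-tuple R)) (f : n.-tuple R -> R) : measurable D -> measurable_fun D f ->
  measurable_fun (D : set T) (f : T -> R).
Proof. move=> mD mf _ Y mY. apply: meas_lift. exact: mf. Qed.

Lemma box_meas (a b : n.-tuple R) : measurable (box a b).
Proof.
have -> : box a b = \bigcap_(i in [set: 'I_n]) ((fun x : n.-tuple R => tnth x i) @^-1` `[tnth a i, tnth b i]).
  by apply/seteqP; split => x /=; [move=> H i _ /=; rewrite in_itv /= H | move=> H i; have := H i I; rewrite /= in_itv].
apply: fin_bigcap_measurable; first exact: finite_finset.
move=> i _. rewrite -[X in measurable X]setTI. apply: measurable_tnth. by [].  exact: measurable_itv.
Qed.
Lemma rowv_inj : injective (@rowv R n).
Proof. move=> x y /matrixP H; apply: eq_from_tnth => i; have := H 0 i; by rewrite !mxE. Qed.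

Lemma open_tuple (O : set (n.-tuple R)) : open (@rowv R n @` O) -> forall x, O x ->
  exists2 e : R, 0 < e & forall y, (forall i, `|tnth x i - tnth y i| < e) -> O y.
Proof.
move=> oO x Ox.
have : nbhs (@rowv R n x) (@rowv R n @` O) by apply: oO; exists x.
move=> /nbhs_ballP [e e0 He]; exists e => // y Hy.
have : (@rowv R n @` O) (@rowv R n y).
  apply: He; split => // i j; rewrite !mxE /ball /=; exact: Hy.
by move=> [z Oz /rowv_inj <-].
Qed.
Definition bq (q : {ffun 'I_n -> rat * rat}) : set (n.-tuple R) :=
  box [tuple ratr (q i).1 | i < n] [tuple ratr (q i).2 | i < n].

Lemma open_meas0 (O : set (n.-tuple R)) : open (@rowv R n @` O) -> measurable O.
Proof.
move=> oO.
pose C (k : nat) : set (n.-tuple R) := match @unpickle {ffun 'I_n -> rat * rat} k with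
  | Some q => if pselect (bq q `<=` O) then bq q else set0 | None => set0 end.
have -> : O = \bigcup_k C k.
  apply/seteqP; split; last first.
    move=> x [k _]; rewrite /C; case: unpickle => [q|//]; case: pselect => // H; exact: H.
  move=> x Ox; have [e e0 He] := @open_tuple O oO x Ox.
  have : forall i : 'I_n, exists ab : rat * rat,
      tnth x i - e < ratr ab.1 <= tnth x i /\ tnth x i <= ratr ab.2 < tnth x i + e.
    move=> i.
    have [a Ha] := @rat_in_itvoo R (tnth x i - e) (tnth x i) ltac:(by rewrite ltrBlDr ltrDl).
    have [b Hb] := @rat_in_itvoo R (tnth x i) (tnth x i + e) ltac:(by rewrite ltrDl).
    exists (a, b) => /=; move: Ha Hb; rewrite !in_itv /= => /andP[-> /ltW ->] /andP[/ltW -> ->]; by [].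
  move=> /fin_all_exists [f Hf].
  pose q := finfun f.
  have sub : bq q `<=` O.
    move=> y Hy; apply: He => i; have := Hy i; rewrite !tnth_mktuple ffunE.
    have := Hf i; move=> [/andP[H1 H2] /andP[H3 H4]] /andP[H5 H6].
    rewrite ltr_norml; apply/andP; split; lra.
  exists (pickle q) => //; rewrite /C pickleK; case: (pselect _) => [H|H]; last by exfalso; apply: H.
  move=> i; rewrite !tnth_mktuple ffunE; have [/andP[_ h1] /andP[h2 _]] := Hf i; by rewrite h1 h2.
apply: bigcupT_measurable => k; rewrite /C; case: unpickle => [q|]; last exact: measurable0; case: (pselect _) => [H|H]; last exact: measurable0.
exact: box_meas.
Qed.
Lemma entry_le_norm (x : 'rV[R]_n) i : `|x 0 i| <= `|x|.
Proof.
rewrite [X in _ <= X]/Num.norm /= mx_normrE.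
exact: (le_bigmax _ (fun ij : 'I_1 * 'I_n => `|x ij.1 ij.2|) (0, i)).
Qed.

Lemma compact_bnd (K : set (n.-tuple R)) : is_compact K ->
  exists2 M : R, 0 <= M & forall y, K y -> forall i, `|tnth y i| <= M.
Proof.
move=> /compact_bounded [M0 [_ HM]].
exists (`|M0| + 1); first by rewrite addr_ge0.
move=> y Ky i.
have := HM (`|M0| + 1) ltac:(rewrite (le_lt_trans (ler_norm M0))// ltrDl//) (@rowv R n y) ltac:(by exists y).
apply: le_trans; have := entry_le_norm (@rowv R n y) i; by rewrite mxE.
Qed.
End S.
Section Mono.
Local Open Scope ereal_scope.
Context d (T : measurableType d) (R : realType) (mu : {measure set T -> \bar R}).
Lemma nn_mono (D1 D2 : set T) (f g : T -> \bar R) :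
  (forall x, D1 x -> 0 <= f x) -> (forall x, D2 x -> 0 <= g x) ->
  (forall x, (f \_ D1) x <= (g \_ D2) x) ->
  \int[mu]_(x in D1) f x <= \int[mu]_(x in D2) g x.
Proof.
move=> f0 g0 fg; rewrite !ge0_integralE //.
apply: le_ereal_sup => _ [h hf <-]; exists h => //.
move=> x; exact: le_trans (hf x) (fg x).
Qed.
Lemma exists_fin (D B : set T) (G : T -> \bar R) : measurable B -> B `<=` D -> 0 < mu B ->
  (forall x, D x -> 0 <= G x) -> \int[mu]_(x in D) G x < +oo -> exists x, B x /\ G x < +oo.
Proof.
move=> mB BD muB G0 Gfin; apply: contrapT => H.
have Hoo : forall x, B x -> G x = +oo.
  move=> x Bx; apply/eqP; rewrite eq_le leey /= leNgt; apply/negP => Gx; apply: H; by exists x.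
have : \int[mu]_(x in B) (cst +oo) x <= \int[mu]_(x in D) G x.
  apply: nn_mono; [by move=> *; exact: leey|exact: G0|].
  move=> x; rewrite /patch; case: ifPn => Bx.
    by rewrite (mem_set (BD _ (set_mem Bx))) Hoo //; exact: set_mem.
  by case: ifPn => // /set_mem /G0.
by rewrite integral_cst // gt0_mulye // leye_eq => /eqP Gy; move: Gfin; rewrite Gy.
Qed.
Lemma bound_int (S O : set T) (u : T -> R) (Fy : T -> \bar R) (A c : R) :
  measurable S -> S `<=` O -> measurable_fun S u -> mu S < +oo -> (0 < c)%R -> (0 <= A)%R ->
  (forall y, O y -> 0 <= Fy y) -> \int[mu]_(y in O) Fy y < +oo ->
  (forall y, S y -> (c * maxr (`|u y| - A) 0)%R%:E <= Fy y) ->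
  \int[mu]_(y in S) `|u y|%:E < +oo.
Proof.
move=> mS SO mu_ muS c0 A0 F0 Ffin Hb.
have mm : measurable_fun S (fun y => maxr (`|u y| - A) 0)%R.
  apply: (@measurable_maxr _ _ _ _ (fun y => `|u y| - A)%R (cst 0%R)); last exact: measurable_cst.
  apply: (@measurable_funB _ _ _ _ (fun y => `|u y|)%R (cst A)); last exact: measurable_cst.
  exact: measurableT_comp.
have m0 : forall y, S y -> 0 <= (maxr (`|u y| - A) 0)%R%:E.
  by move=> y _; rewrite lee_fin le_max lexx orbT.
have le1 : \int[mu]_(y in S) `|u y|%:E <= \int[mu]_(y in S) (A%:E + (maxr (`|u y| - A) 0)%R%:E).
  apply: ge0_le_integral => //.
  - apply/measurable_EFinP; exact: measurableT_comp.
  - apply: emeasurable_funD; first exact: measurable_cst.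
    exact/measurable_EFinP.
  - by move=> y _; rewrite -EFinD lee_fin -lerBlDl le_max lexx.
have le2 : \int[mu]_(y in S) (c%:E * (maxr (`|u y| - A) 0)%R%:E) <= \int[mu]_(y in O) Fy y.
  apply: nn_mono => //.
  - move=> y Sy; apply: mule_ge0; [by rewrite lee_fin ltW|exact: m0].
  - move=> y; rewrite /patch; case: ifPn => Sy.
      by rewrite (mem_set (SO _ (set_mem Sy))) -EFinM; apply: Hb; exact: set_mem.
    by case: ifPn => // /set_mem /F0.
rewrite ge0_integralZl_EFin in le2; [|by []|exact: m0|exact/measurable_EFinP|exact: ltW].
apply: (le_lt_trans le1).
rewrite ge0_integralD; [|by []|by move=> y _; rewrite lee_fin|exact: measurable_cst|exact: m0|exact/measurable_EFinP].
rewrite integral_cst //; apply: lte_add_pinfty.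
  by apply: lte_mul_pinfty => //; rewrite lee_fin.
have : c%:E * \int[mu]_(y in S) (maxr (`|u y| - A) 0)%R%:E < +oo by apply: le_lt_trans le2 Ffin.
apply: contraTT; rewrite -leNgt leye_eq => /eqP ->.
by rewrite muleC gt0_mulye ?lte_fin // ltxx.
Qed.
End Mono.
Section Phi.
Variables (R : realType) (phi : R -> R).
Hypothesis hy : @young R phi.

Lemma phi_ge0 t : 0 <= t -> 0 <= phi t.
Proof.
case: hy => _ _ p0 pp _; rewrite le_eqVlt => /orP[/eqP <-|/pp/ltW//]; by rewrite p0.
Qed.

Lemma phi_lin t : 0 <= t -> phi 1 * (t - 1) <= phi t.
Proof.
move=> t0; have p10 : 0 < phi 1 by case: hy => _ _ _ pp _; apply: pp.
case: (lerP t 1) => t1.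
  have h := phi_ge0 _ t0; have : phi 1 * (t - 1) <= 0 by rewrite pmulr_rle0 //; lra. lra.
case: hy => _ cv p0 _ _.
have t0' : 0 < t by lra.
have := cv t 0 t^-1 t0 (lexx 0) ltac:(rewrite invr_ge0 t0 /= invf_le1 //; lra).
rewrite mulr0 addr0 p0 mulr0 addr0 mulVf ?gt_eqF // => h.
have : phi 1 * t <= phi t by rewrite -ler_pdivlMr // mulrC.
have : phi 1 * (t - 1) <= phi 1 * t by rewrite ler_wpM2l ?ltW //; lra.
lra.
Qed.

Lemma key (m : nat) (a b l al de d Dn : R) : 0 < l -> al < 0 -> 0 < de -> de <= d -> d ^+ m <= Dn ->
  (phi 1 / (l * de `^ al * Dn)) * maxr (`|b| - (`|a| + l * de `^ al)) 0
    <= phi (`|a - b| / (l * d `^ al)) / d ^+ m.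
Proof.
move=> l0 al0 de0 ded dD.
have p10 : 0 < phi 1 by case: hy => _ _ _ pp _; apply: pp.
have d0 : 0 < d by lra.
have dm0 : 0 < d ^+ m by exact: exprn_gt0.
have Dn0 : 0 < Dn by lra.
set k := l * de `^ al.
have k0 : 0 < k by rewrite mulr_gt0 // powR_gt0.
set P := d `^ al.
have P0 : 0 < P by rewrite powR_gt0.
have Pde : P <= de `^ al.
  have h1 : de `^ (- al) <= d `^ (- al).
    apply: ge0_ler_powR; rewrite ?nnegrE ?oppr_ge0; lra.
  have e1 : forall x, x `^ al = (x `^ (- al))^-1 by move=> x; rewrite -powRN opprK.
  by rewrite /P !e1 lef_pV2 ?posrE ?powR_gt0.
set t := `|a - b| / (l * P).
have t0 : 0 <= t by rewrite divr_ge0 // ltW // mulr_gt0.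
have ht : `|a - b| / k <= t.
  rewrite /t; apply: ler_wpM2l => //; rewrite lef_pV2 ?posrE ?mulr_gt0 ?powR_gt0 // /k.
  by apply: ler_wpM2l => //; rewrite ltW.
have hb : `|b| - `|a| <= `|a - b|.
  by rewrite distrC lerB_dist.
have pt := phi_lin _ t0.
have ph0 := phi_ge0 _ t0.
have s1 : phi t / Dn <= phi t / d ^+ m.
  by apply: ler_wpM2l => //; rewrite lef_pV2 ?posrE.
apply: le_trans s1.
case: (lerP (`|b| - (`|a| + k)) 0) => hm.
  by rewrite mulr0 divr_ge0 // ltW.
have -> : phi 1 / (k * Dn) * (`|b| - (`|a| + k)) = (phi 1 * ((`|b| - `|a|) / k - 1)) / Dn.
  by field; rewrite ?gt_eqF.
apply: ler_wpM2r; first by rewrite invr_ge0 ltW.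
apply: le_trans pt; apply: ler_wpM2l; first exact: ltW.
rewrite lerD2r; apply: le_trans ht; apply: ler_wpM2r => //; rewrite invr_ge0 ltW //.
Qed.
End Phi.
Section Ed.
Variables (R : realType) (n : nat).
Lemma edist_ge (x y : n.-tuple R) i : `|tnth x i - tnth y i| <= Defs.edist x y.
Proof.
rewrite /Defs.edist -sqrtr_sqr ler_sqrt; last by apply: sumr_ge0 => j _; exact: sqr_ge0.
rewrite (bigD1 i) //= lerDl; apply: sumr_ge0 => j _; exact: sqr_ge0.
Qed.

Lemma edist_pow (x y : n.-tuple R) W : (forall i, `|tnth x i - tnth y i| <= W) ->
  Defs.edist x y ^+ (2 * n) <= (n%:R * W ^+ 2) ^+ n.
Proof.
move=> HW; rewrite exprM /Defs.edist sqr_sqrtr; last by apply: sumr_ge0 => j _; exact: sqr_ge0.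
apply: lerXn2r; rewrite ?nnegrE.
- by apply: sumr_ge0 => j _; exact: sqr_ge0.
- by rewrite mulr_ge0 // sqr_ge0.
have -> : n%:R * W ^+ 2 = \sum_(i < n) W ^+ 2 by rewrite sumr_const card_ord mulr_natl.
apply: ler_sum => i _; rewrite -real_normK ?num_real //; apply: lerXn2r; rewrite ?nnegrE //.
exact: le_trans (normr_ge0 _) (HW i).
Qed.
End Ed.
Section Main.
Variables (R : realType) (n : nat) (lebn : {measure set (n.-tuple R) -> \bar R}).
Local Notation T := (LebT lebn).
Local Notation L := (Leb lebn).

Lemma half_meas1 i c : measurable [set y : n.-tuple R | c <= tnth y i].
Proof.
have -> : [set y : n.-tuple R | c <= tnth y i] = setT `&` ((fun y => tnth y i) @^-1` `[c, +oo[).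
  by apply/seteqP; split => y /=; rewrite in_itv /= andbT; [move=> ->|case].
apply: measurable_tnth => //; exact: measurable_itv.
Qed.

Lemma half_meas2 i c : measurable [set y : n.-tuple R | tnth y i < c].
Proof.
have -> : [set y : n.-tuple R | tnth y i < c] = setT `&` ((fun y => tnth y i) @^-1` `]-oo, c[).
  by apply/seteqP; split => y /=; rewrite in_itv /=; [move=> ->|case].
apply: measurable_tnth => //; exact: measurable_itv.
Qed.

Lemma le_sum_norm (x : n.-tuple R) i : `|tnth x i| <= \sum_j `|tnth x j|.
Proof. rewrite (bigD1 i) //= lerDl; apply: sumr_ge0 => j _; exact: normr_ge0. Qed.

Lemma Lbox (a b : n.-tuple R) : is_lebesgue_borel lebn -> (forall i, tnth a i <= tnth b i) ->
  L (box a b) = (\prod_(i < n) (tnth b i - tnth a i))%:E.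
Proof. move=> Hl ab; rewrite L_base ?Hl //; exact: box_meas. Qed.
End Main.
Theorem lemma2p2 (R : realType) (n : nat)
  (lebn : {measure set (n.-tuple R) -> \bar R})
  (alpha : R) (phi : R -> R) (O : set (n.-tuple R)) :
  @is_lebesgue_borel R n lebn ->
  (2 <= n)%N -> - n%:R < alpha < 0 -> @young R phi -> @is_domain R n O ->
  @Bsp R n lebn alpha phi O `<=` @Bdot R n lebn alpha phi O /\
  @Bdot R n lebn alpha phi O `<=` @L1loc R n lebn O.
Proof.
move=> Hleb hn. move=> /andP[alN al0]. move=> hy. move=> [nO [oO _]].
split; first by move=> u [].
move=> u [mu_ Hfin]; split => // K KO cK.
have mO : measurable (O : set (LebT lebn)) := @meas_lift R n lebn O (@open_meas0 R n O oO).
move: Hfin; rewrite /Bdot_norm => /ereal_inf_lt [_ [l [l0 Hl] <-] _].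
pose F (x y : LebT lebn) := (phi (`|u x - u y| / (l * Defs.edist x y `^ alpha)) / Defs.edist x y ^+ (2 * n))%:E.
pose G x := (\int[Leb lebn]_(y in O) F x y)%E.
have HG : (\int[Leb lebn]_(x in O) G x <= 1)%E := Hl.
have F0 : forall x y, (0 <= F x y)%E.
  move=> x y; rewrite lee_fin divr_ge0 ?exprn_ge0 ?sqrtr_ge0 //.
  by apply: (@phi_ge0 R phi hy); rewrite divr_ge0 // mulr_ge0 ?powR_ge0 // ltW.
have G0 : forall w, (0 <= G w)%E by move=> w; apply: integral_ge0 => y0 _; exact: F0.
have Gfin : (\int[Leb lebn]_(x in O) G x < +oo)%E by apply: le_lt_trans HG _; exact: ltey.
have [z Oz] := nO.
have [e e0 He] := @open_tuple R n O oO z Oz.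
pose a1 := [tuple tnth z i - e / 2 | i < n]; pose b1 := [tuple tnth z i - e / 4 | i < n].
pose a2 := [tuple tnth z i + e / 4 | i < n]; pose b2 := [tuple tnth z i + e / 2 | i < n].
have pickx : forall a b : n.-tuple R, (forall i, tnth a i < tnth b i) ->
    (forall i, tnth z i - e / 2 <= tnth a i) -> (forall i, tnth b i <= tnth z i + e / 2) ->
    exists x, box a b x /\ (G x < +oo)%E.
  move=> a b ab za bz.
  have mB : measurable (box a b : set (LebT lebn)) := @meas_lift R n lebn _ (@box_meas R n a b).
  have BO : box a b `<=` O.
    move=> y Hy; apply: He => i; have := Hy i; have := za i; have := bz i.
    move=> h1 h2 /andP[h3 h4]; rewrite ltr_norml; apply/andP; split; lra.
  have LB : (0 < Leb lebn (box a b))%E.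
    rewrite (@Lbox R n lebn a b Hleb); last by move=> i; apply: ltW.
    rewrite lte_fin; apply: prodr_gt0 => i _; rewrite subr_gt0; exact: ab.
  have [x [Bx Gx]] := @exists_fin _ _ _ (Leb lebn) O (box a b) G mB BO LB (fun x _ => G0 x) Gfin.
  by exists x.
have [x1 [B1x1 Gx1]] : exists x, box a1 b1 x /\ (G x < +oo)%E.
  apply: pickx => i; rewrite !tnth_mktuple; lra.
have [x2 [B2x2 Gx2]] : exists x, box a2 b2 x /\ (G x < +oo)%E.
  apply: pickx => i; rewrite !tnth_mktuple; lra.
have [M M0 HM] := @compact_bnd R n K cK.
have n0 : (0 < n)%N by apply: leq_trans hn.
pose i0 : 'I_n := Ordinal n0.
pose W := M + \sum_i `|tnth x1 i| + \sum_i `|tnth x2 i| + 1.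
pose BoxM := box [tuple - M | i < n] [tuple M | i < n].
have BoxMP : forall y, BoxM y -> forall i, `|tnth y i| <= M.
  move=> y Hy i; have := Hy i; rewrite !tnth_mktuple => /andP[h1 h2]; rewrite ler_norml h1 h2 //.
have W0 : 0 < W.
  rewrite /W; have := @sumr_ge0 _ _ (index_enum 'I_n) xpredT (fun i => `|tnth x1 i|) (fun i _ => normr_ge0 _).
  have := @sumr_ge0 _ _ (index_enum 'I_n) xpredT (fun i => `|tnth x2 i|) (fun i _ => normr_ge0 _).
  lra.
have Wb : forall (x y : n.-tuple R), (x = x1 \/ x = x2) -> BoxM y -> forall i, `|tnth x i - tnth y i| <= W.
  move=> x y hx By i; apply: le_trans (ler_normB _ _) _.
  have h1 := BoxMP y By i; have h2 := @le_sum_norm R n x1 i; have h3 := @le_sum_norm R n x2 i.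
  have := @sumr_ge0 _ _ (index_enum 'I_n) xpredT (fun i => `|tnth x1 i|) (fun i _ => normr_ge0 _).
  have := @sumr_ge0 _ _ (index_enum 'I_n) xpredT (fun i => `|tnth x2 i|) (fun i _ => normr_ge0 _).
  rewrite /W; case: hx => ->; lra.
pose Dn := (n%:R * W ^+ 2) ^+ n.
have Dn0 : 0 < Dn by rewrite /Dn exprn_gt0 // mulr_gt0 ?ltr0n ?exprn_gt0.
pose de := e / 4.
have de0 : 0 < de by rewrite /de; lra.
have mBoxM : measurable BoxM := @box_meas R n _ _.
have LBoxM : (Leb lebn BoxM < +oo)%E.
  rewrite /BoxM (@Lbox R n lebn _ _ Hleb); first exact: ltey.
  by move=> i; rewrite !tnth_mktuple; lra.
have side : forall (S : set (LebT lebn)) (xk : n.-tuple R), measurable S -> S `<=` O -> S `<=` BoxM ->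
    (x1 = xk \/ x2 = xk) -> (G xk < +oo)%E -> (forall y, S y -> de <= `|tnth xk i0 - tnth y i0|) ->
    (\int[Leb lebn]_(y in S) `|u y|%:E < +oo)%E.
  move=> S xk mS SO SB hxk Gxk Hfar.
  apply: (@bound_int _ _ _ (Leb lebn) S O u (F xk) (`|u xk| + l * de `^ alpha) (phi 1 / (l * de `^ alpha * Dn))).
  - exact: mS.
  - exact: SO.
  - exact: measurable_funS mO SO mu_.
  - apply: le_lt_trans LBoxM; apply: le_measure; rewrite ?inE //; exact: meas_lift.
  - have p10 : 0 < phi 1 by case: hy => _ _ _ pp _; apply: pp.
    by rewrite divr_gt0 // !mulr_gt0 // powR_gt0.
  - by rewrite addr_ge0 // mulr_ge0 ?powR_ge0 // ltW.
  - by move=> y _; exact: F0.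
  - exact: Gxk.
  - move=> y Sy; rewrite lee_fin /F.
    apply: (@key R phi hy (2 * n) (u xk) (u y) l alpha de (Defs.edist xk y) Dn l0 al0 de0).
      exact: le_trans (Hfar y Sy) (@edist_ge R n _ _ _).
    apply: (@edist_pow R n) => i; apply: Wb; last exact: SB.
    by case: hxk => ->; [left|right].
pose S1 := (O : set (LebT lebn)) `&` (BoxM `&` [set y | tnth z i0 <= tnth y i0]).
pose S2 := (O : set (LebT lebn)) `&` (BoxM `&` [set y | tnth y i0 < tnth z i0]).
have mS1 : measurable S1.
  apply: measurableI => //; apply: meas_lift; apply: measurableI => //; exact: half_meas1.
have mS2 : measurable S2.
  apply: measurableI => //; apply: meas_lift; apply: measurableI => //; exact: half_meas2.
have I1 : (\int[Leb lebn]_(y in S1) `|u y|%:E < +oo)%E.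
  apply: (side S1 x1) => //; first by move=> y [].
  - by move=> y [_ []].
  - by left.
  - move=> y [_ [_ /= hy0]]; have := B1x1 i0; rewrite !tnth_mktuple => /andP[_ h].
    rewrite distrC ler_normr; apply/orP; left; rewrite /de; lra.
have I2 : (\int[Leb lebn]_(y in S2) `|u y|%:E < +oo)%E.
  apply: (side S2 x2) => //; first by move=> y [].
  - by move=> y [_ []].
  - by right.
  - move=> y [_ [_ /= hy0]]; have := B2x2 i0; rewrite !tnth_mktuple => /andP[h _].
    rewrite ler_normr; apply/orP; left; rewrite /de; lra.
have KS : (\int[Leb lebn]_(x in K) `|u x|%:E <= \int[Leb lebn]_(x in S1 `|` S2) `|u x|%:E)%E.
  apply: nn_mono; [by move=> *; rewrite lee_fin|by move=> *; rewrite lee_fin|].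
  move=> y; rewrite /patch; case: ifPn => Ky; last by case: ifPn => _ //; rewrite lee_fin. move: Ky => /set_mem Ky.
  have Oy := KO _ Ky.
  have By : BoxM y by move=> i; rewrite !tnth_mktuple -ler_norml; exact: HM.
  rewrite mem_set //; case: (lerP (tnth z i0) (tnth y i0)) => h; [left|right]; by split.
apply: le_lt_trans KS _.
rewrite ge0_integral_setU //.
- exact: lte_add_pinfty.
- apply/measurable_EFinP; apply: measurableT_comp => //.
  apply: measurable_funS mO _ mu_; by move=> y [[]|[]].
- rewrite disj_set2E; apply/eqP/seteqP; split => // y [[_ [_ /= h1]] [_ [_ /= h2]]]; lra.
Qed.
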